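(* Let $I$ be a finite set and $t$ a rooted tree with vertex set $I$. The interval $[\widehat{0},t]$ of the poset $\Pi_{\operatorname{NAP}}(I)$ is isomorphic to the poset $[t,\widehat{1}]_s$ of all sub-rooted trees of $t$ ordered by $\leq_s$.
   Context: $\Pi_{\operatorname{NAP}}(I)$ is the set of forests of rooted trees whose vertex set is exactly $I$ (each vertex labelled by an element of $I$). It is partially ordered as follows: $y$ covers $x$ iff $y$ is obtained from $x$ by adding an edge from the root of one component of $x$ to the root of another component of $x$ (the latter root remaining the root of the merged tree); $\leq$ is the reflexive–transitive closure. Its minimum $\widehat{0}$ is the forest of one-vertex trees; a rooted tree $t$ on $I$ is an element of $\Pi_{\operatorname{NAP}}(I)$. A sub-rooted tree of $t$ is the restriction of $t$ to a subset of vertices containing the root of $t$ and such that every vertex on the path from the root to a vertex of the subset is in the subset (a lower ideal of $t$ viewed as a poset with root as minimum). For rooted trees, $t\leq_s t'$ means $t'$ is a sub-rooted tree of $t$. $[t,\widehat{1}]_s$ denotes the set of sub-rooted trees of $t$ with the order $\leq_s$ (so $t$ is its minimum and the one-vertex tree on the root, $\widehat{1}$, is its maximum). *)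

(* Defs.v *)
From mathcomp Require Import all_boot.
From Stdlib Require Import Relations.
Set Implicit Arguments. Unset Strict Implicit. Unset Printing Implicit Defensive.

(* A forest of rooted trees with vertex set I is encoded by its parent
   function p : I -> option I  (p v = None  iff  v is a root), subject to
   acyclicity: following parents from any vertex reaches a root. *)
Definition forest (I : finType) := {ffun I -> option I}.

Fixpoint par_iter (I : finType) (p : forest I) (n : nat) (v : I) : option I :=
  match n with
  | 0 => Some v
  | n'.+1 => obind p (par_iter p n' v)
  end.

Definition is_forest (I : finType) (p : forest I) : Prop :=
  forall v : I, exists n, par_iter p n v = None.

Definition is_root (I : finType) (p : forest I) (r : I) : bool := p r == None.

Definition is_rooted_tree (I : finType) (t : forest I) : Prop :=
  is_forest t /\ exists! r : I, is_root t r.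

Definition on_root_path (I : finType) (p : forest I) (u v : I) : Prop :=
  exists n, par_iter p n v = Some u.

Definition nap_cover (I : finType) (x y : forest I) : Prop :=
  is_forest x /\
  exists r1 r2 : I, [/\ r1 != r2, is_root x r1, is_root x r2 &
    y = [ffun v => if v == r1 then Some r2 else x v]].

Definition nap_le (I : finType) (x y : forest I) : Prop :=
  is_forest x /\ is_forest y /\ clos_refl_trans (forest I) (@nap_cover I) x y.

Definition is_subrooted (I : finType) (t : forest I) (S : {set I}) : Prop :=
  (forall r, is_root t r -> r \in S) /\
  (forall v u, v \in S -> on_root_path t u v -> u \in S).

(* Order <=_s on sub-rooted trees of t (each identified with its vertex set,
   the tree being the restriction of t): t|S1 <=_s t|S2 iff t|S2 is a
   sub-rooted tree of t|S1.  Since S1 is a lower ideal of t, the root paths in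
   t|S1 are those of t. *)
Definition le_s (I : finType) (t : forest I) (S1 S2 : {set I}) : Prop :=
  S2 \subset S1 /\ is_subrooted t S2.

(* Main.v *)
Require Import Defs.
From mathcomp Require Import all_boot.
From Stdlib Require Import Relations.
Set Implicit Arguments. Unset Strict Implicit. Unset Printing Implicit Defensive.

Section Aux.
Variable I : finType.
Implicit Types (p x y t : forest I) (S : {set I}).

Definition gS t S : forest I := [ffun v => if v \in S then None else t v].
Definition fR x : {set I} := [set v | x v == None].

Lemma par_iterSr p n v : par_iter p n.+1 v = obind (par_iter p n) (p v).
Proof. elim: n v => [|n IH] v; first by simpl; case: (p v).
change (obind p (par_iter p n.+1 v) = obind (par_iter p n.+1) (p v)).
by rewrite IH; case: (p v). Qed.

Lemma forest_sub x y : (forall u, x u = None \/ x u = y u) -> is_forest y -> is_forest x.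
Proof.
move=> H Fy v; case: (Fy v) => n Hn; exists n.
suff: par_iter x n v = None \/ par_iter x n v = par_iter y n v by case=> ->.
clear Hn; elim: n => [|n IH] /=; first by right.
case: IH => ->; first by left.
case: (par_iter y n v) => [u|] /=; last by left. exact: H.
Qed.

Lemma no_self_loop t v : is_forest t -> t v <> Some v.
Proof.
move=> F E; case: (F v) => n; suff ->: par_iter t n v = Some v by [].
by elim: n => //= n ->; rewrite /= E.
Qed.

Section Forest.
Variable t : forest I.
Hypothesis F : is_forest t.

Lemma exF v : exists n, par_iter t n v == None.
Proof. by case: (F v) => n Hn; exists n; apply/eqP. Qed.

Definition h v := ex_minn (exF v).

Lemma h_child u v : t u = Some v -> h v < h u.
Proof.
move=> Tu; rewrite /h; case: ex_minnP => a /eqP Ha mina.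
case: ex_minnP => b /eqP Hb minb.
case: b Hb minb => [|b] Hb minb; first by [].
rewrite par_iterSr Tu /= in Hb.
by rewrite ltnS; apply: mina; apply/eqP.
Qed.

Lemma exists_leaf (A : {set I}) : A != set0 ->
  exists2 v, v \in A & forall u, t u = Some v -> u \notin A.
Proof.
case/set0Pn => v0 Hv0; case: (arg_maxnP h Hv0) => v Hv Hmax.
exists v => // u Hu; apply/negP => uA.
have := leq_ltn_trans (Hmax u uA) (h_child Hu). by rewrite ltnn.
Qed.

Lemma anc1 u v : t u = Some v -> on_root_path t v u.
Proof. by move=> E; exists 1. Qed.

Lemma chain n : forall S S', #|S :\: S'| = n -> is_subrooted t S -> is_subrooted t S' ->
  S' \subset S -> clos_refl_trans (forest I) (@nap_cover I) (gS t S) (gS t S').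
Proof.
elim: n => [|n IH] S S' Hc HS HS' sub.
  have: S :\: S' == set0 by rewrite -cards_eq0 Hc.
  rewrite setD_eq0 => sub'.
  have ->: S = S' by apply/eqP; rewrite eqEsubset sub sub'.
  exact: rt_refl.
have : S :\: S' != set0 by rewrite -cards_eq0 Hc.
case/exists_leaf => v; rewrite inE => /andP [vS' vS] leaf.
case Tv: (t v) => [w|]; last first.
  by move: vS'; rewrite (proj1 HS' v) //; rewrite /is_root Tv.
have wS : w \in S by apply: (proj2 HS v w vS); exact: anc1.
have childS c : t c = Some v -> c \in S -> False.
  move=> Tc cS; move: (leaf c Tc); rewrite inE cS andbT negbK => cS'.
  by move: vS'; rewrite (proj2 HS' c v cS' (anc1 Tc)).
have HSv : is_subrooted t (S :\ v).
  split.
    move=> r Hr; rewrite in_setD1 (proj1 HS r Hr) andbT.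
    by apply/eqP => E; move: Hr; rewrite /is_root E Tv.
  move=> u a; rewrite in_setD1 => /andP [uv uS] [m Hm].
  rewrite in_setD1 (proj2 HS u a uS) ?andbT; last by exists m.
  apply/eqP => E; subst a.
  case: m Hm => [|m] Hm; first by move: Hm uv => [->]; rewrite eqxx.
  move: Hm => /=; case Hc': (par_iter t m u) => [c|] //= Tc.
  apply: (childS c Tc); apply: (proj2 HS u c uS); by exists m.
apply: (rt_trans _ _ _ (gS t (S :\ v))).
  apply: rt_step; split.
    apply: forest_sub F => u; rewrite ffunE; case: ifP; auto.
  exists v, w; split.
  - by apply/eqP => E; subst w; exact: (no_self_loop F Tv).
  - by rewrite /is_root ffunE vS.
  - by rewrite /is_root ffunE wS.
  apply/ffunP => u; rewrite !ffunE in_setD1.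
  by case: eqP => [->|_] //=; rewrite Tv.
apply: IH => //.
  move: Hc; rewrite (cardsD1 v (S :\: S')) !inE vS' vS /= add1n => -[<-].
  by rewrite setDDl setDDl setUC.
apply/subsetP => u uS'; rewrite in_setD1 (subsetP sub u uS') andbT.
by apply/eqP => E; subst u; rewrite uS' in vS'.
Qed.


Lemma fR_gS S : is_subrooted t S -> fR (gS t S) = S.
Proof.
move=> HS; apply/setP => v; rewrite !inE ffunE.
case: ifP => // vS; apply/negbTE/negP => /eqP E.
by move: vS; rewrite (proj1 HS v) //; rewrite /is_root E.
Qed.

Lemma base r : is_root t r -> (forall r', is_root t r' -> r = r') ->
  is_subrooted t [set r] /\ gS t [set r] = t.
Proof.
move=> Hr Hu; have Hn n : par_iter t n r = Some r \/ par_iter t n r = None.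
  elim: n => [|n IH]; first by left.
  change (obind t (par_iter t n r) = Some r \/ obind t (par_iter t n r) = None).
  by case: IH => ->; right => //=; apply/eqP.
split; first split.
- by move=> r' /Hu ->; rewrite inE.
- move=> v a; rewrite inE => /eqP -> [n Hm]; rewrite inE.
  by case: (Hn n); rewrite Hm // => -[->].
apply/ffunP => u; rewrite ffunE inE; case: eqP => [->|_] //.
by apply/esym/eqP.
Qed.

Lemma L r x : is_root t r -> (forall r', is_root t r' -> r = r') ->
  clos_refl_trans (forest I) (@nap_cover I) x t ->
  exists S, is_subrooted t S /\ x = gS t S.
Proof.
move=> Hr Hu H0.
suff key : forall x z, clos_refl_trans_1n (forest I) (@nap_cover I) x z -> z = t ->
  exists S, is_subrooted t S /\ x = gS t S.
  by apply: key => //; apply: clos_rt_rt1n.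
move=> {H0} x1 z H; elim: H => [x0 -> | x0 y0 z0 Hc Hr' IH Ez].
  by exists [set r]; case: (base Hr Hu) => A B; split.
case: (IH Ez) => S' [HS' Ey].
case: Hc => _ [r1 [r2 [n12 R1 R2 Ey']]].
have yr1 : y0 r1 = Some r2 by rewrite Ey' ffunE eqxx.
have r1S' : r1 \notin S' by apply/negP => r1S; move: yr1; rewrite Ey ffunE r1S.
have Tr1 : t r1 = Some r2 by move: yr1; rewrite Ey ffunE (negbTE r1S').
have r2S' : r2 \in S'.
  have : y0 r2 = None by rewrite Ey' ffunE eq_sym (negbTE n12); apply/eqP.
  rewrite Ey ffunE; case: ifP => [//|nS E]; move: (proj1 HS' r2); rewrite /is_root E eqxx => /(_ isT); by rewrite nS.
exists (r1 |: S'); split; first split.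
- by move=> r' Hr'0; rewrite in_setU1 (proj1 HS' r' Hr'0) orbT.
- move=> v a; rewrite in_setU1 => /orP [/eqP ->|vS] [m Hm]; last first.
    by rewrite in_setU1 (proj2 HS' v a vS) ?orbT //; exists m.
  case: m Hm => [|m] Hm; first by move: Hm => [->]; rewrite in_setU1 eqxx.
  rewrite par_iterSr Tr1 /= in Hm.
  by rewrite in_setU1 (proj2 HS' r2 a r2S') ?orbT //; exists m.
apply/ffunP => u; rewrite ffunE in_setU1; case: eqP => [->|/eqP ne] /=.
  by apply/eqP.
have: y0 u = x0 u by rewrite Ey' ffunE (negbTE ne).
by move=> <-; rewrite Ey ffunE.
Qed.

Lemma cover_roots x y : clos_refl_trans (forest I) (@nap_cover I) x y ->
  fR y \subset fR x.
Proof.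
elim=> [x0 y0 Hc | x0 | x0 y0 z0 _ A _ B]; last first.
- exact: subset_trans B A.
- exact: subxx.
case: Hc => _ [r1 [r2 [_ _ _ ->]]].
apply/subsetP => v; rewrite !inE ffunE; by case: (v == r1).
Qed.

End Forest.
End Aux.

Theorem proposition6p1 (I : finType) (t : forest I) :
  is_rooted_tree t ->
  exists (f : forest I -> {set I}) (g : {set I} -> forest I),
    [/\ (forall x, nap_le x t -> is_subrooted t (f x)),
        (forall S, is_subrooted t S -> nap_le (g S) t),
        (forall x, nap_le x t -> g (f x) = x),
        (forall S, is_subrooted t S -> f (g S) = S) &
        (forall x y, nap_le x t -> nap_le y t ->
           (nap_le x y <-> le_s t (f x) (f y)))].
Proof.
case=> F [r [Hr Hu]].
have Lx x : nap_le x t -> exists S, is_subrooted t S /\ x = gS t S.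
  by case=> _ [_ H]; exact: L Hr Hu H.
case: (base Hr Hu) => Hb Eb.
exists (@fR I), (gS t); split.
- by move=> x /Lx [S [HS ->]]; rewrite fR_gS.
- move=> S HS; split.
    apply: forest_sub F => u; rewrite ffunE; case: ifP; auto.
  split => //. rewrite -{2}Eb; apply: (chain F erefl) => //.
  by rewrite sub1set (proj1 HS).
- by move=> x /Lx [S [HS ->]]; rewrite fR_gS.
- by move=> S HS; rewrite fR_gS.
move=> x y Hx Hy; case: (Lx x Hx) => Sx [HSx Ex]; case: (Lx y Hy) => Sy [HSy Ey].
split.
  case=> _ [_ H]; split; last by rewrite Ey fR_gS.
  exact: cover_roots H.
rewrite Ex Ey !fR_gS // => -[sub _]; split; first by rewrite -Ex; case: Hx.
split; first by rewrite -Ey; case: Hy.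
exact: (chain F erefl).
Qed.
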